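(* Let $(X,\tau)$ be a topological space which is not statistically compact, let $\infty^X$ be a point not in $X$, $X^s=X\cup\{\infty^X\}$, and $\tau^X_s=\tau\cup\{X^s\setminus C: C \text{ is a closed and statistically compact subset of } X\}$. Then $\tau^X_s$ is a topology on $X^s$ and $(X^s,\tau^X_s)$ is statistically compact.
   Context: For $A\subseteq\mathbb{N}$ let $d_n(A)=|A\cap\{1,\dots,n\}|/n$, $\overline{d}(A)=\limsup_n d_n(A)$, $\underline{d}(A)=\liminf_n d_n(A)$, and $d(A)$ their common value when equal. A sequence in $X$ is a map from an infinite subset $M\subseteq\mathbb{N}$ into $X$, written $(x_n)_{n\in M}$; a subsequence is $(x_n)_{n\in N}$ with $N\subseteq M$ infinite. It is nonthin if $\overline{d}(M)>0$. A nonthin sequence $(x_n)_{n\in M}$ is statistically convergent to $a\in X$ if for every open $U\ni a$, $d(\{n\in M:x_n\notin U\})=0$. A topological space is statistically compact if every nonthin sequence in it has a nonthin subsequence that is statistically convergent to some point of the space; a subset is statistically compact if it is so in the subspace topology. $(X^s,\tau^X_s)$ is called the one point statistical compactification of $X$. *)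

(* Defs.v *)
From HB Require Import structures.
From mathcomp Require Import all_boot all_order all_algebra.
From mathcomp Require Import all_classical all_reals all_analysis.
From mathcomp Require Import Rstruct Rstruct_topology.
Set Implicit Arguments. Unset Strict Implicit. Unset Printing Implicit Defensive.
Import Order.TTheory GRing.Theory Num.Theory.
Local Open Scope classical_set_scope.
Local Open Scope ring_scope.

Definition dens (A : set nat) (n : nat) : Rdefinitions.R :=
  (\sum_(1 <= i < n.+1) ((i \in A) : nat)%:R) / n%:R.

Definition upper_dens (A : set nat) : \bar Rdefinitions.R :=
  limn_esup (fun n => (dens A n)%:E).

Definition nonthin (M : set nat) : Prop := (0 < upper_dens M)%E.

(* (x_n)_{n in M} is statistically convergent to a, for the topology given by
   the family of open sets O : d({n in M : x_n notin U}) = 0 for every open U ∋ a *)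
Definition stat_conv (T : Type) (O : set (set T)) (M : set nat) (x : nat -> T)
  (a : T) : Prop :=
  forall U, O U -> U a ->
    (fun n => dens [set k | M k /\ ~ U (x k)] n) @ \oo --> (0 : Rdefinitions.R).

Definition stat_compact_on (T : Type) (O : set (set T)) (A : set T) : Prop :=
  forall (M : set nat) (x : nat -> T),
    infinite_set M -> nonthin M -> (forall n, M n -> A (x n)) ->
    exists (N : set nat) (a : T),
      [/\ N `<=` M, infinite_set N, nonthin N, A a & stat_conv O N x a].

Definition stat_compact (T : Type) (O : set (set T)) : Prop :=
  stat_compact_on O setT.

Definition subspace_opens (T : Type) (O : set (set T)) (A : set T) : set (set T) :=
  [set V | exists U, O U /\ V = U `&` A].

Definition stat_compact_subset (T : Type) (O : set (set T)) (A : set T) : Prop :=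
  stat_compact_on (subspace_opens O A) A.

Definition is_topology (T : Type) (O : set (set T)) : Prop :=
  [/\ O set0, O setT,
      (forall F : set (set T), F `<=` O -> O (\bigcup_(A in F) A))
    & (forall A B, O A -> O B -> O (A `&` B))].

(* one point statistical compactification: X^s = option X, infinity = None *)
Definition stat_opens (X : topologicalType) : set (set (option X)) :=
  [set V | exists U : set X, open U /\ V = Some @` U] `|`
  [set V | exists C : set X, [/\ closed C, stat_compact_subset (@open X) C
                                & V = ~` (Some @` C)]].
Arguments stat_opens X : clear implicits.

(* Main.v *)
Require Import Defs.
From mathcomp Require Import all_boot all_order all_algebra.
From mathcomp Require Import all_classical all_reals all_analysis.
From mathcomp Require Import Rstruct Rstruct_topology.
Set Implicit Arguments. Unset Strict Implicit. Unset Printing Implicit Defensive.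
Import Order.TTheory GRing.Theory Num.Theory.
Local Open Scope classical_set_scope.
Local Open Scope ring_scope.
Local Notation R := Rdefinitions.R.

Lemma dens_ge0 A n : 0 <= dens A n.
Proof. by rewrite /dens divr_ge0// sumr_ge0. Qed.

Lemma dens_le A B n : A `<=` B -> dens A n <= dens B n.
Proof.
move=> AB; rewrite /dens ler_wpM2r ?invr_ge0//.
apply: ler_sum => i _; rewrite ler_nat.
by case: (boolP (i \in A)) => //= /set_mem /AB /mem_set ->.
Qed.

Lemma dens_U A B n : dens (A `|` B) n <= dens A n + dens B n.
Proof.
rewrite /dens -mulrDl ler_wpM2r ?invr_ge0// -big_split /=.
apply: ler_sum => i _; rewrite -natrD ler_nat.
case: (boolP (i \in A `|` B)) => //= /set_mem [] /mem_set ->//.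
by rewrite addnC.
Qed.

Lemma dens_sub0 A B : A `<=` B -> dens B @ \oo --> (0:R) -> dens A @ \oo --> (0:R).
Proof.
move=> AB HB; apply: (@squeeze_cvgr _ _ _ _ (fun=> 0) (dens B)) => //.
  by apply: nearW => n; rewrite dens_ge0 dens_le.
exact: cvg_cst.
Qed.

Lemma dens0_nonthin A : dens A @ \oo --> (0:R) -> ~ nonthin A.
Proof.
move=> H; rewrite /nonthin /upper_dens.
have -> : limn_esup (fun n => (dens A n)%:E) = 0%E.
  apply: (cvg_limn_einf_sup _).2.
  by apply: cvg_EFin; [exact: nearW|exact: H].
by rewrite ltxx.
Qed.

Lemma notdens0_nonthin A : ~ (dens A @ \oo --> (0:R)) -> nonthin A.
Proof.
move=> H; rewrite /nonthin; apply/negP => /negP; rewrite -leNgt => H2.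
apply: H.
have := @limn_esup_le_cvg R (fun n => (dens A n)%:E) 0%E H2.
move=> /(_ (fun n => _)) H3.
have {H3} := H3 (fun n => dens_ge0 A n).
by move/fine_cvg.
Qed.

Lemma nonthinP A : nonthin A <-> ~ (dens A @ \oo --> (0:R)).
Proof. by split; [move=> H /dens0_nonthin|exact: notdens0_nonthin]. Qed.

Lemma nonthin_sub A B : A `<=` B -> nonthin A -> nonthin B.
Proof.
move=> AB /nonthinP HA; apply/nonthinP => HB; apply: HA; exact: dens_sub0 HB.
Qed.

Lemma nonthinU A B : nonthin (A `|` B) -> nonthin A \/ nonthin B.
Proof.
move=> /nonthinP H; apply: contrapT => /not_orP [/nonthinP/contrapT HA /nonthinP/contrapT HB].
apply: H.
apply: (@squeeze_cvgr _ _ _ _ (fun=> 0) (fun n => dens A n + dens B n)).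
- by apply: nearW => n; rewrite dens_ge0 dens_U.
- exact: cvg_cst.
- have := @cvgD R R^o nat \oo _ _ _ _ _ HA HB; rewrite addr0 => H2; exact: H2.
Qed.

Lemma sum_bound (A : set nat) K : (forall a, A a -> (a < K)%N) -> forall n,
  \sum_(1 <= i < n.+1) ((i \in A):nat)%:R <= (minn n K)%:R :> R.
Proof.
move=> AK; elim=> [|n IH]; first by rewrite big_geq.
rewrite big_nat_recr //=.
case: (boolP (n.+1 \in A)) => [/set_mem /AK nK|_].
  have e1 : minn n.+1 K = n.+1 by apply/minn_idPl; exact: ltnW.
  have e2 : minn n K = n by apply/minn_idPl; exact: ltnW (ltnW nK).
  rewrite e1 -natr1 /= lerD2r.
  by rewrite e2 in IH.
rewrite /= addr0 (le_trans IH)// ler_nat.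
by rewrite leq_min geq_minr andbT (leq_trans (geq_minl _ _)).

Qed.

Lemma finite_bound (A : set nat) : finite_set A -> exists K, forall a, A a -> (a < K)%N.
Proof.
move=> /finite_fsetP [X ->]; exists (\max_(i <- finmap.enum_fset X) i).+1 => a /= aX.
by rewrite ltnS; apply: (@leq_bigmax_seq _ _ xpredT id).
Qed.

Lemma finite_dens0 (A : set nat) : finite_set A -> dens A @ \oo --> (0:R).
Proof.
move=> /finite_bound [K AK].
rewrite -cvg_shiftS.
apply: (@squeeze_cvgr _ _ _ _ (fun=> 0) (fun n => K%:R * harmonic n)).
- apply: nearW => n /=; rewrite dens_ge0 /=.
  rewrite /dens ler_wpM2r ?invr_ge0//.
  rewrite (le_trans (sum_bound AK n.+1))// ler_nat geq_minr //.
- exact: cvg_cst.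
- have := @cvgMl_tmp R nat \oo _ harmonic K%:R 0 cvg_harmonic.
  rewrite mulr0 => H; exact: H.
Qed.

Lemma nonthin_infinite A : nonthin A -> infinite_set A.
Proof. by move=> /nonthinP H Af; apply: H; exact: finite_dens0. Qed.

Lemma stat_conv_mono T1 T2 (O1 : set (set T1)) (O2 : set (set T2)) N
  (y : nat -> T1) (x : nat -> T2) a b :
  stat_conv O1 N y a ->
  (forall V, O2 V -> V b -> exists U,
     [/\ O1 U, U a & forall k, N k -> ~ V (x k) -> ~ U (y k)]) ->
  stat_conv O2 N x b.
Proof.
move=> H H2 V OV Vb; have [U [OU Ua HU]] := H2 V OV Vb.
apply: dens_sub0 (H U OU Ua) => k [Nk nV]; split => //; exact: HU.
Qed.

Lemma closed_sub_sc (X : topologicalType) (C D : set X) : closed D -> D `<=` C ->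
  stat_compact_subset open C -> stat_compact_subset open D.
Proof.
move=> cD DC HC M x Minf Mnt MD.
have [N [a [NM Ninf Nnt Ca Hconv]]] := HC M x Minf Mnt (fun n Mn => DC _ (MD n Mn)).
have Da : D a.
  apply: contrapT => nDa.
  have : dens N @ \oo --> (0:R).
    apply: dens_sub0 (Hconv (~` D `&` C) _ _).
    - move=> k Nk; split => //; move=> [nD _]; exact: nD (MD k (NM k Nk)).
    - by exists (~` D); split => //; rewrite openC.
    - by [].
  by move/dens0_nonthin.
exists N, a; split => //.
apply: (stat_conv_mono (O2 := subspace_opens open D) (x := x) Hconv) => V [U [oU ->]] [Ua _]; exists (U `&` C); split => //.
- by exists U.
- move=> k Nk nUD [Uy _]; apply: nUD; split => //; exact: MD (NM k Nk).
Qed.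

Lemma sc_piece (X : topologicalType) (C1 C : set X) M1 M x :
  stat_compact_subset open C1 -> C1 `<=` C -> M1 `<=` M -> nonthin M1 ->
  (forall n, M1 n -> C1 (x n)) ->
  exists N a, [/\ N `<=` M, infinite_set N, nonthin N, C a &
                  stat_conv (subspace_opens open C) N x a].
Proof.
move=> H1 sub MM nt Mx.
have [N [a [NM Ninf Nnt Ca Hc]]] := H1 M1 x (nonthin_infinite nt) nt Mx.
exists N, a; split => //; [by move=> k /NM /MM | exact: sub |].
apply: (stat_conv_mono (O2 := subspace_opens open C) (x := x) Hc) => V [U [oU ->]] [Ua _]; exists (U `&` C1); split => //.
  by exists U.
move=> k Nk nV [Uy _]; apply: nV; split => //; apply: sub; exact: Mx _ (NM _ Nk).
Qed.

Lemma union_sc (X : topologicalType) (C1 C2 : set X) :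
  stat_compact_subset open C1 -> stat_compact_subset open C2 ->
  stat_compact_subset open (C1 `|` C2).
Proof.
move=> H1 H2 M x Minf Mnt Mx.
have : nonthin ([set n | M n /\ C1 (x n)] `|` [set n | M n /\ ~ C1 (x n)]).
  apply: nonthin_sub Mnt => n Mn.
  by case: (pselect (C1 (x n))) => h; [left|right].
case/nonthinU => h.
- apply: (sc_piece H1 (@subsetUl _ C1 C2) _ h) => n [] //.
- apply: (sc_piece H2 (@subsetUr _ C1 C2) _ h) => n [] // Mn nC1.
  by case: (Mx n Mn).
Qed.

Lemma sc_set0 (X : topologicalType) : stat_compact_subset (@open X) set0.
Proof.
move=> M x Minf _ Mx; exfalso; apply: Minf.
suff -> : M = set0 by exact: finite_set0.
by apply/seteqP; split => // n /Mx.
Qed.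

Lemma Some_img (X : Type) (U : set X) y : (Some @` U) (Some y) <-> U y.
Proof. by split => [[z Uz [<-]]//|Uy]; exists y. Qed.

Lemma None_img (X : Type) (U : set X) : ~ (Some @` U) None.
Proof. by case. Qed.

Lemma stat_topology (X : topologicalType) : is_topology (stat_opens X).
Proof.
split.
- left; exists set0; split; [exact: open0| by rewrite image_set0].
- right; exists set0; split; [exact: closed0 | exact: sc_set0 | by rewrite image_set0 setC0].
- move=> F FO.
  have openpre : forall V, F V -> open (Some @^-1` V).
    move=> V /FO [[U [oU ->]]|[C [cC _ ->]]].
      suff -> : Some @^-1` (Some @` U) = U by [].
      by apply/seteqP; split => y /= /Some_img.
    suff -> : Some @^-1` (~` (Some @` C)) = ~` C by rewrite openC.
    by apply/seteqP; split => y /= H /Some_img.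
  pose W := \bigcup_(V in F) (Some @^-1` V).
  have oW : open W by apply: bigcup_open.
  case: (pselect (exists2 V, F V & V None)) => [[V0 FV0 V0N]|noN].
  + right.
    case: (FO _ FV0) => [[U [_ eV]]|[C0 [cC0 sC0 eV]]].
      by rewrite eV in V0N; case: (None_img V0N).
    have cD : closed (~` W `&` C0) by apply: closedI => //; rewrite closedC.
    exists (~` W `&` C0); split => //.
      by apply: (closed_sub_sc (C:=C0)) => // y [].
    apply/seteqP; split => [z [V FV Vz]|z].
      case: z Vz => [y|] Vy /=.
        move=> /Some_img [nW _]; apply: nW; by exists V.
      by case.
    case: z => [y|] /= H; last by exists V0.
    case: (pselect (W y)) => [[V FV Vy]|nW]; first by exists V.
    case: (pselect (C0 y)) => c.
      by exfalso; apply: H; exists y.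
    exists V0 => //; rewrite eV => /Some_img; exact: c.
  + left; exists W; split => //.
    apply/seteqP; split => [z [V FV Vz]|z [y [V FV Vy] <-]]; last by exists V.
    case: z Vz => [y|] Vz; first by exists y => //; exists V.
    by exfalso; apply: noN; exists V.
- move=> A B HA HB; case: HA => [[Ua1 [op1 ->]]|[C1 [c1 s1 ->]]]; case: HB => [[Ua2 [op2 ->]]|[C2 [c2 s2 ->]]].
  + left; exists (Ua1 `&` Ua2); split; first exact: openI.
    apply/seteqP; split => [z [[y Uy <-] /Some_img Ua2y]|z [y [Ua1y Ua2y] <-]].
      by exists y.
    by split; exists y.
  + left; exists (Ua1 `&` ~` C2); split.
      by apply: openI => //; rewrite openC.
    apply/seteqP; split => [z [[y Uy <-] nC]|z [y [Uy nCy] <-]].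
      by exists y => //; split => // Cy; apply: nC; exists y.
    by split; [exists y| move/Some_img].
  + left; exists (~` C1 `&` Ua2); split.
      by apply: openI => //; rewrite openC.
    apply/seteqP; split => [z [nC [y Uy e]]|z [y [nCy Uy] <-]].
      subst z; by exists y => //; split => // Cy; apply: nC; exists y.
    by split; [move/Some_img| exists y].
  + right; exists (C1 `|` C2); split; [exact: closedU | exact: union_sc |].
    by rewrite image_setU setCU.
Qed.

Lemma stat_compact_s (X : topologicalType) : stat_compact (stat_opens X).
Proof.
move=> M x Minf Mnt _.
case: (pselect (forall C, closed C -> stat_compact_subset open C ->
   dens [set k | M k /\ (Some @` C) (x k)] @ \oo --> (0:R))) => [Hall|].
  exists M, None; split => //.
  move=> V [[U [_ eV]]|[C [cC sC eV]]]; rewrite eV.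
    by case.
  move=> _; apply: dens_sub0 (Hall C cC sC) => k [Mk nV]; split => //.
  exact: contrapT nV.
move=> /existsNP [C /not_implyP [cC /not_implyP [sC ndC]]].
have nt : nonthin [set k | M k /\ (Some @` C) (x k)] by apply/nonthinP.
case: (pselect (exists k, M k /\ (Some @` C) (x k))) => [[k0 [_ [y0 _ _]]]|nM]; last first.
  exfalso; apply: (nonthin_infinite nt).
  suff -> : [set k | M k /\ (Some @` C) (x k)] = set0 by exact: finite_set0.
  by apply/seteqP; split => // k Hk; apply: nM; exists k.
pose y := fun n => odflt y0 (x n).
have Hy : forall n, M n /\ (Some @` C) (x n) -> x n = Some (y n) /\ C (y n).
  by move=> n [Mn [z Cz e]]; rewrite /y -e.
have [N [a [NM Ninf Nnt Ca Hc]]] :=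
  sC _ y (nonthin_infinite nt) nt (fun n h => (Hy n h).2).
exists N, (Some a); split => //; first by move=> k /NM [].
apply: (stat_conv_mono (O2 := stat_opens X) (x := x) Hc) =>
  V [[U [oU eV]]|[C' [cC' sC' eV]]]; rewrite eV.
  move=> /Some_img Ua; exists (U `&` C); split => //; first by exists U.
  move=> k Nk; have [-> _] := Hy k (NM k Nk); move=> nV [Uy _]; apply: nV.
  by exists (y k).
move=> nC'a; exists (~` C' `&` C); split.
- by exists (~` C'); split => //; rewrite openC.
- by split => // C'a; apply: nC'a; exists a.
- move=> k Nk; have [-> _] := Hy k (NM k Nk); move=> nV [nC' _]; apply: nV.
  by move/Some_img.
Qed.

Theorem mainTheorem17 (X : topologicalType) :
  ~ stat_compact (@open X) ->
  is_topology (stat_opens X) /\ stat_compact (stat_opens X).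
Proof. by move=> _; split; [exact: stat_topology | exact: stat_compact_s]. Qed.
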